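(* Let $W$ be a finite set with $w\ge1$ elements, $\mathcal G=\{G_1,\dots,G_h\}$ a family of nonempty subsets of $W$, $\tau_k$ the number of $k$-element transversals of $\mathcal G$ and $q_k=\tau_k/\binom wk$. Draw elements of $W$ independently and uniformly at random with replacement, and let $T$ be the smallest $n$ such that the set of elements drawn in the first $n$ draws is a transversal of $\mathcal G$. Then for each $k\in\{1,\dots,w\}$, the probability that $T$ equals the draw at which the $k$-th distinct element first appears is $q_k-q_{k-1}$. Moreover $$\operatorname{Var}(T)=\sum_{k=0}^{w-1}(1-q_k)\left(\frac{w(w+k)}{(w-k)^2}+\frac{2w^2}{w-k}\big(H(w)-H(w-k)\big)\right)-\mathbb E[T]^2,$$ where $H(m)=\sum_{j=1}^m\frac1j$ and $H(0)=0$.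
   Context: A set $X\subseteq W$ is a transversal of $\mathcal G$ if $X\cap G_i\neq\emptyset$ for all $i$. *)

(* Defs.v *)
From Stdlib Require Import Reals.
From mathcomp Require Import all_boot.
Set Implicit Arguments. Unset Strict Implicit. Unset Printing Implicit Defensive.

Section Defs.
Variable W : finType.

Definition transversal (Gs : seq {set W}) (X : {set W}) : bool :=
  all (fun G => X :&: G != set0) Gs.

Definition drawn n (f : {ffun 'I_n -> W}) (m : nat) : {set W} :=
  f @: [set i : 'I_n | (i < m)%N].

(* the event "T = n", decided by the first n draws:
   T = n is the least m with drawn m a transversal *)
Definition T_is (Gs : seq {set W}) n (f : {ffun 'I_n -> W}) : bool :=
  transversal Gs (drawn f n) && [forall m : 'I_n, ~~ transversal Gs (drawn f m)].

(* the event "D_k = n": n is the draw at which the k-th distinct element first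
   appears, i.e. the least m with at least k distinct elements drawn *)
Definition Dk_is (k : nat) n (f : {ffun 'I_n -> W}) : bool :=
  (k <= #|drawn f n|)%N && [forall m : 'I_n, (#|drawn f m| < k)%N].

(* P(T = n) under i.i.d. uniform draws *)
Definition probT (Gs : seq {set W}) (n : nat) : R :=
  Rdiv (INR #|[set f : {ffun 'I_n -> W} | T_is Gs f]|) (INR (#|W| ^ n)%N).

Definition probTD (Gs : seq {set W}) (k n : nat) : R :=
  Rdiv (INR #|[set f : {ffun 'I_n -> W} | T_is Gs f && Dk_is k f]|) (INR (#|W| ^ n)%N).

Definition tau (Gs : seq {set W}) (k : nat) : nat :=
  #|[set X : {set W} | (#|X| == k) && transversal Gs X]|.

Definition qk (Gs : seq {set W}) (k : nat) : R :=
  Rdiv (INR (tau Gs k)) (INR 'C(#|W|, k)).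

End Defs.

Fixpoint harm (m : nat) : R :=
  match m with
  | O => R0
  | S m' => Rplus (harm m') (Rinv (INR (S m')))
  end.

(* Main.v *)
Require Import Defs.
From Stdlib Require Import Reals Lra Lia.
From mathcomp Require Import all_boot.
From mathcomp Require Import zify.
Set Implicit Arguments. Unset Strict Implicit. Unset Printing Implicit Defensive.

Section Comb.
Variable W : finType.
Variable Gs : seq {set W}.

Notation tr := (Defs.transversal Gs).

Lemma tr_mono (A B : {set W}) : A \subset B -> tr A -> tr B.
Proof.
move=> sAB /allP H; apply/allP => G HG; have := H G HG.
apply: contra => /eqP E; rewrite -subset0 -E; exact: setSI.
Qed.

Lemma drawn_mono n (f : {ffun 'I_n -> W}) m m' : (m <= m')%N -> drawn f m \subset drawn f m'.
Proof.
move=> le; apply: imsetS; apply/subsetP => i; rewrite !inE => H; exact: leq_trans H le.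
Qed.

Definition ext n (g : {ffun 'I_n -> W}) (x : W) : {ffun 'I_n.+1 -> W} :=
  [ffun i => if unlift ord_max i is Some j then g j else x].
Definition rst n (f : {ffun 'I_n.+1 -> W}) : {ffun 'I_n -> W} :=
  [ffun j => f (widen_ord (leqnSn n) j)].

Lemma ext_max n g x : @ext n g x ord_max = x.
Proof. by rewrite ffunE unlift_none. Qed.

Lemma widen_lift n (j : 'I_n) : widen_ord (leqnSn n) j = lift ord_max j.
Proof. by apply: ord_inj; rewrite lift_max. Qed.

Lemma ext_widen n g x (j : 'I_n) : @ext n g x (widen_ord (leqnSn n) j) = g j.
Proof. by rewrite widen_lift ffunE liftK. Qed.

Lemma ext_lift n g x (j : 'I_n) : @ext n g x (lift ord_max j) = g j.
Proof. by rewrite ffunE liftK. Qed.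

Lemma rst_ext n g x : rst (@ext n g x) = g.
Proof. by apply/ffunP => j; rewrite ffunE ext_widen. Qed.

Lemma ext_rst n (f : {ffun 'I_n.+1 -> W}) : ext (rst f) (f ord_max) = f.
Proof.
apply/ffunP => i; rewrite ffunE; case: (unliftP ord_max i) => [j -> | ->] //.
by rewrite ffunE widen_lift.
Qed.

Lemma sum_split n (F : {ffun 'I_n.+1 -> W} -> nat) :
  \sum_f F f = \sum_(g : {ffun 'I_n -> W}) \sum_(x : W) F (ext g x).
Proof.
rewrite pair_big /=.
rewrite (reindex (fun p : {ffun 'I_n -> W} * W => ext p.1 p.2)) //=.
exists (fun f => (rst f, f ord_max)) => [[g x] _ | f _] /=.
  by rewrite rst_ext ext_max.
exact: ext_rst.
Qed.

Lemma drawn_ext_n n g x : drawn (@ext n g x) n = drawn g n.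
Proof.
apply/setP => y; apply/imsetP/imsetP => [[i] | [j]]; rewrite inE => Hi ->.
- case: (unliftP ord_max i) Hi => [j -> | ->]; last by rewrite /= ltnn.
  by move=> _; exists j; rewrite ?inE ?ltn_ord // ext_lift.
- by exists (widen_ord (leqnSn n) j); rewrite ?inE /= ?ext_widen.
Qed.

Lemma drawn_ext_Sn n g x : drawn (@ext n g x) n.+1 = x |: drawn g n.
Proof.
apply/setP => y; rewrite in_setU1; apply/imsetP/orP.
- case=> i _ ->; case: (unliftP ord_max i) => [j -> | ->].
  + by right; rewrite ext_lift; apply/imsetP; exists j; rewrite ?inE ?ltn_ord.
  + by left; rewrite ext_max.
- case=> [/eqP -> | /imsetP [j _ ->]].
  + by exists ord_max; rewrite ?inE ?ext_max.
  + exists (widen_ord (leqnSn n) j); first by rewrite inE ltn_ord.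
    by rewrite ext_widen.
Qed.

Lemma drawn0 n (g : {ffun 'I_n -> W}) : drawn g 0 = set0.
Proof. by apply/setP => y; rewrite inE; apply/imsetP => [[i]]; rewrite inE. Qed.

Lemma T_is_ext n g x :
  T_is Gs (@ext n g x) = ~~ tr (drawn g n) && tr (x |: drawn g n).
Proof.
rewrite /T_is drawn_ext_Sn andbC; congr (_ && _).
apply/forallP/idP => [H | H m].
- by have := H ord_max; rewrite /= drawn_ext_n.
- apply: contra H => Hm; rewrite -(drawn_ext_n g x); apply: tr_mono Hm.
  apply: drawn_mono; rewrite -ltnS; exact: ltn_ord.
Qed.

Lemma T_notin n g x : T_is Gs (@ext n g x) -> x \notin drawn g n.
Proof.
rewrite T_is_ext => /andP [H1 H2]; apply/negP => Hx.
by move: H2; rewrite (setUidPr _) ?sub1set // (negbTE H1).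
Qed.

Lemma Dk_is_ext n g x k : T_is Gs (@ext n g x) ->
  Dk_is k (@ext n g x) = (#|drawn g n|.+1 == k).
Proof.
move=> HT; have Hx := T_notin HT.
rewrite /Dk_is drawn_ext_Sn cardsU1 Hx eqn_leq andbC; congr (_ && _).
apply/forallP/idP => [H | H m].
- by have := H ord_max; rewrite /= drawn_ext_n.
- apply: leq_ltn_trans H; rewrite -(drawn_ext_n g x); apply: subset_leq_card.
  apply: drawn_mono; rewrite -ltnS; exact: ltn_ord.
Qed.

Definition c n (S : {set W}) : nat := \sum_(g : {ffun 'I_n -> W}) (drawn g n == S).

Lemma group_drawn n (F : {set W} -> nat) :
  \sum_(g : {ffun 'I_n -> W}) F (drawn g n) = \sum_(S : {set W}) c n S * F S.
Proof.
rewrite /c; under [RHS]eq_bigr do rewrite big_distrl /=.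
rewrite exchange_big /=; apply: eq_bigr => g _.
rewrite (bigD1 (drawn g n)) //= eqxx mul1n big1 ?addn0 // => S /negbTE.
by rewrite eq_sym => ->.
Qed.

Lemma c0 S : c 0 S = (S == set0).
Proof.
rewrite /c; under eq_bigr do rewrite drawn0.
by rewrite sum_nat_const card_ffun card_ord expn0 mul1n eq_sym.
Qed.

Lemma c_rec n S : c n.+1 S = \sum_(x : W) (x \in S) * (c n S + c n (S :\ x)).
Proof.
rewrite /c sum_split /=.
under eq_bigr do under eq_bigr do rewrite drawn_ext_Sn.
rewrite exchange_big /=; apply: eq_bigr => x _.
rewrite (group_drawn n (fun S0 => nat_of_bool (x |: S0 == S))).
have [xS | xnS] := boolP (x \in S); last first.
  rewrite mul0n big1 // => S' _; have [E|] := eqVneq (x |: S') S; last by rewrite muln0.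
  by move: xnS; rewrite -E setU11.
rewrite mul1n (bigD1 S) //= (bigD1 (S :\ x)) /=; last first.
  by apply/eqP => E; move: (setD11 x S); rewrite E xS.
rewrite setD1K // (setUidPr _) ?sub1set // eqxx !muln1 addnA big1 ?addn0 //.
move=> S' /andP [nS nSx]; have [E|] := eqVneq (x |: S') S; last by rewrite muln0.
have [xS'|xS'] := boolP (x \in S').
  by move: nS; rewrite -E (setUidPr _) ?sub1set ?eqxx.
by move: nSx; rewrite -E setU1K ?eqxx.
Qed.

Fixpoint s (n j : nat) : nat :=
  if n is n'.+1 then j * (s n' j + s n' j.-1) else (j == 0%N : nat).

Lemma c_s n S : c n S = s n #|S|.
Proof.
elim: n S => [|n IH] S; first by rewrite c0 /= cards_eq0.
rewrite c_rec /=.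
have -> : \sum_(x : W) (x \in S) * (c n S + c n (S :\ x)) =
          \sum_(x : W) (x \in S) * (s n #|S| + s n #|S|.-1).
  apply: eq_bigr => x _; case: (boolP (x \in S)) => xS //.
  by rewrite !IH (cardsD1 x S) xS.
rewrite -big_distrl /=; congr (_ * _).
by rewrite -sum1_card [RHS]big_mkcond; apply: eq_bigr => x _; case: (x \in S).
Qed.


Definition good (S : {set W}) (x : W) : bool := ~~ tr S && tr (x |: S).
Definition M k : nat := \sum_(S : {set W}) \sum_(x : W) (good S x && (#|S| == k)).

Lemma cntTD n k :
  \sum_(f : {ffun 'I_n.+1 -> W}) (T_is Gs f && Dk_is k.+1 f) = s n k * M k.
Proof.
rewrite sum_split.
have E : forall g x, (T_is Gs (@ext n g x) && Dk_is k.+1 (ext g x)) =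
                     (good (drawn g n) x && (#|drawn g n| == k)).
  move=> g x; case HT: (T_is Gs (ext g x)).
  - by rewrite (Dk_is_ext _ HT) eqSS; move: HT; rewrite T_is_ext /good => ->.
  - by move: HT; rewrite T_is_ext /good => ->.
under eq_bigr do under eq_bigr do rewrite E.
rewrite (group_drawn n (fun S => \sum_x (good S x && (#|S| == k)))) /M big_distrr /=.
apply: eq_bigr => S _; rewrite c_s.
case: (eqVneq #|S| k) => [-> // | ne].
by rewrite big1 ?muln0 // => x _; rewrite andbF.
Qed.

Lemma cntT n : \sum_(f : {ffun 'I_n.+1 -> W}) (T_is Gs f : nat) =
  \sum_(k < #|W|) \sum_(f : {ffun 'I_n.+1 -> W}) (T_is Gs f && Dk_is k.+1 f).
Proof.
rewrite exchange_big /=; apply: eq_bigr => f _.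
case HT: (T_is Gs f); last by rewrite big1.
rewrite -(ext_rst f) in HT *.
have Hx := T_notin HT.
have lt : (#|drawn (rst f) n| < #|W|)%N.
  apply: leq_trans (max_card (f ord_max |: drawn (rst f) n)).
  by rewrite cardsU1 Hx.
under eq_bigr do rewrite (Dk_is_ext _ HT) eqSS /=.
rewrite (bigD1 (Ordinal lt)) //= eqxx big1 // => k nk.
case: eqP => // E; case/negP: nk; apply/eqP/ord_inj; by rewrite /= E.
Qed.

Lemma tau_sum k : tau Gs k = \sum_(X : {set W}) ((#|X| == k) && tr X).
Proof.
rewrite /tau -sum1_card big_mkcond /=; apply: eq_bigr => X _.
by rewrite inE; case: (_ && _).
Qed.

Lemma M_tau k : (M k + (#|W| - k) * tau Gs k = k.+1 * tau Gs k.+1)%N.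
Proof.
have E1 : (#|W| - k) * tau Gs k =
          \sum_S \sum_x (tr S && (#|S| == k) && (x \notin S)).
  rewrite tau_sum big_distrr /=; apply: eq_bigr => S _.
  case: (eqVneq #|S| k) => [<- | ne]; last first.
    by rewrite /= muln0 big1 // => x _; rewrite andbF.
  rewrite ?eqxx /=; case: (tr S) => /=; last by rewrite muln0 big1.
  rewrite muln1.
  have -> : #|W| - #|S| = #|~: S| by rewrite -(cardsC S) addKn.
  rewrite -sum1_card big_mkcond; apply: eq_bigr => x _; rewrite inE.
  by case: (x \in S).
have E2 : \sum_(S : {set W}) \sum_(x : W) ((#|S| == k) && (x \notin S) && tr (x |: S)) =
          k.+1 * tau Gs k.+1.
  rewrite exchange_big /=.
  transitivity (\sum_(x : W) \sum_(X : {set W}) ((#|X| == k.+1) && (x \in X) && tr X)).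
    apply: eq_bigr => x _.
    rewrite [RHS](bigID (fun X : {set W} => x \in X)) /= [X in (_ + X)%N]big1 ?addn0; last first.
      by move=> X /negbTE ->; rewrite andbF.
    rewrite [RHS](reindex_onto (fun S : {set W} => x |: S) (fun X => X :\ x)) /=; last first.
      by move=> X; exact: setD1K.
    rewrite [RHS]big_mkcond; apply: eq_bigr => S _.
    rewrite setU11 /=.
    case: (boolP (x \in S)) => xS /=.
      rewrite andbF (setUidPr _) ?sub1set //.
      have -> : (S :\ x == S) = false.
        by apply/negbTE/eqP => E; move: (setD11 x S); rewrite E xS.
      by [].
    by rewrite setU1K // eqxx cardsU1 xS /= eqSS andbT.
  rewrite exchange_big tau_sum big_distrr /=; apply: eq_bigr => X _.
  case: (eqVneq #|X| k.+1) => [E | ne]; last first.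
    by rewrite big1 ?muln0 // => x _; rewrite (negbTE ne).
  rewrite -E; case: (tr X) => /=; last by rewrite muln0 big1 // => x; rewrite andbF.
  rewrite muln1 -sum1_card [RHS]big_mkcond; apply: eq_bigr => x _.
  by rewrite andbT.
rewrite E1 -E2 /M -big_split; apply: eq_bigr => S _; rewrite -big_split.
apply: eq_bigr => x _ /=.
rewrite /good; case: (boolP (x \in S)) => xS /=.
  by rewrite (setUidPr _) ?sub1set //; case: (tr S); case: (#|S| == k).
case TS: (tr S) => /=.
  by rewrite (tr_mono (subsetUr [set x] S) TS); case: (#|S| == k).
by rewrite addn0 andbT andbC.
Qed.

End Comb.
Section RealTools.
Local Open Scope R_scope.

Lemma cv_ext (U V : nat -> R) l : (forall n, U n = V n) -> Un_cv U l -> Un_cv V l.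
Proof.
intros E H eps Heps; destruct (H eps Heps) as [N HN]; exists N; intros n Hn.
rewrite -E; apply HN; auto.
Qed.

Lemma cv_const (U : nat -> R) c : (forall n, U n = c) -> Un_cv U c.
Proof.
intros E eps Heps; exists 0%nat; intros n _; rewrite E; unfold R_dist.
rewrite Rminus_diag Rabs_R0; lra.
Qed.

Lemma cv_shift (U : nat -> R) l : Un_cv U l -> Un_cv (fun n => U (S n)) l.
Proof.
intros H eps Heps; destruct (H eps Heps) as [N HN]; exists N; intros n Hn.
apply HN; unfold ge in *; lia.
Qed.

Lemma cv_eq (U : nat -> R) l1 l2 : l1 = l2 -> Un_cv U l1 -> Un_cv U l2.
Proof. intros ->; auto. Qed.

Lemma gr_sum (f : nat -> R) : (forall n, 0 <= f n) -> Un_growing (sum_f_R0 f).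
Proof. intros H n; simpl; specialize (H (S n)); lra. Qed.

Lemma gr_plus (U V : nat -> R) : Un_growing U -> Un_growing V ->
  Un_growing (fun n => U n + V n).
Proof. intros HU HV n; specialize (HU n); specialize (HV n); lra. Qed.

Lemma gr_scal (U : nat -> R) c : 0 <= c -> Un_growing U -> Un_growing (fun n => c * U n).
Proof. intros Hc HU n; specialize (HU n); nra. Qed.

Lemma cv_scal (U : nat -> R) c l : Un_cv U l -> Un_cv (fun n => c * U n) (c * l).
Proof. intros H; apply CV_mult; auto; apply cv_const; auto. Qed.

Lemma key (Y r : nat -> R) (a lr : R) : 0 <= a < 1 ->
  Un_growing Y -> Un_growing r -> Un_cv r lr ->
  (forall N, Y (S N) = a * Y N + r N) -> Un_cv Y (lr / (1 - a)).
Proof.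
intros Ha GY Gr Cr HY.
assert (Hr : forall n, r n <= lr) by (apply growing_ineq; auto).
assert (HM : forall N, Y (S N) <= lr / (1 - a)).
{ intro N. apply (Rmult_le_reg_l (1 - a)); [lra|].
  replace ((1 - a) * (lr / (1 - a))) with lr by (field; lra).
  specialize (HY N); specialize (GY N); specialize (Hr N). nra. }
assert (Hub : has_ub Y).
{ exists (lr / (1 - a)). intros z [i ->]. destruct i.
  - apply Rle_trans with (Y 1%nat); [apply GY | apply HM].
  - apply HM. }
destruct (growing_cv Y GY Hub) as [l Hl].
assert (Hs : Un_cv (fun N => Y (S N)) l) by (apply cv_shift; auto).
assert (Hs2 : Un_cv (fun N => Y (S N)) (a * l + lr)).
{ apply (cv_ext (U := fun N => a * Y N + r N)).
  - intro n; rewrite HY; auto.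
  - apply CV_plus; auto; apply cv_scal; auto. }
pose proof (UL_sequence _ _ _ Hs Hs2) as E.
apply (cv_eq (l1 := l)); auto.
apply (Rmult_eq_reg_r (1 - a)); [|lra].
unfold Rdiv; rewrite Rmult_assoc Rinv_l; lra.
Qed.

Lemma sum_shift (f : nat -> R) N :
  sum_f_R0 f (S N) = f 0%nat + sum_f_R0 (fun n => f (S n)) N.
Proof. induction N as [|N IH]; simpl in *; [ring | rewrite IH; ring]. Qed.

Lemma sum_scal (f : nat -> R) c N :
  sum_f_R0 (fun n => c * f n) N = c * sum_f_R0 f N.
Proof. induction N as [|N IH]; simpl; [ring | rewrite IH; ring]. Qed.

Lemma sum_ext (f g : nat -> R) N : (forall n, f n = g n) -> sum_f_R0 f N = sum_f_R0 g N.
Proof. intros H; induction N as [|N IH]; simpl; rewrite H ?IH; auto. Qed.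

End RealTools.

Section Edef.
Local Open Scope R_scope.
Definition E1 (w j : nat) : R :=
  sum_f_R0 (fun i => INR w / (INR w - INR i)) j.
Definition E2 (w j : nat) : R :=
  sum_f_R0 (fun i => 2 * INR w / (INR w - INR i) * E1 w i - INR w / (INR w - INR i)) j.
Lemma E1_S w j : E1 w (S j) = E1 w j + INR w / (INR w - INR (S j)).
Proof. reflexivity. Qed.
Lemma E2_S w j : E2 w (S j) = E2 w j + (2 * INR w / (INR w - INR (S j)) * E1 w (S j) - INR w / (INR w - INR (S j))).
Proof. reflexivity. Qed.
End Edef.

Section Ana.
Local Open Scope R_scope.
Variable w : nat.
Variable x : nat -> nat -> R.
Hypothesis x_ge0 : forall n j, 0 <= x n j.
Hypothesis x00 : x 0%nat 0%nat = 1.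
Hypothesis x0S : forall j, x 0%nat (S j) = 0.
Hypothesis xS0 : forall n, x (S n) 0%nat = 0.
Hypothesis xSS : forall n j, (S j < w)%coq_nat ->
  x (S n) (S j) = INR (S j) / INR w * x n (S j) + (INR w - INR j) / INR w * x n j.

Definition W0 j N := sum_f_R0 (fun n => x n j) N.
Definition W1 j N := sum_f_R0 (fun n => (INR n + 1) * x n j) N.
Definition W2 j N := sum_f_R0 (fun n => (INR n + 1) ^ 2 * x n j) N.

Lemma W_base N : W0 0 N = 1 /\ W1 0 N = 1 /\ W2 0 N = 1.
Proof.
unfold W0, W1, W2; induction N as [|N IH]; simpl.
- rewrite x00; repeat split; ring.
- destruct IH as [H0 [H1 H2]]; rewrite H0 H1 H2 xS0; repeat split; ring.
Qed.

Section Step.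
Variable j : nat.
Hypothesis Hj : (S j < w)%coq_nat.
Let a := INR (S j) / INR w.
Let b := (INR w - INR j) / INR w.

Lemma W0_rec N : W0 (S j) (S N) = a * W0 (S j) N + b * W0 j N.
Proof.
unfold W0; rewrite sum_shift x0S Rplus_0_l.
rewrite (sum_ext (g := fun n => a * x n (S j) + b * x n j)).
- rewrite sum_plus !sum_scal; auto.
- intro n; rewrite xSS //.
Qed.

Lemma W1_rec N : W1 (S j) (S N) =
  a * W1 (S j) N + (a * W0 (S j) N + b * (W1 j N + W0 j N)).
Proof.
unfold W0, W1; rewrite sum_shift x0S Rmult_0_r Rplus_0_l.
rewrite (sum_ext (g := fun n => a * ((INR n + 1) * x n (S j)) +
   (a * x n (S j) + (b * ((INR n + 1) * x n j) + b * x n j)))).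
- rewrite !sum_plus !sum_scal; ring.
- intro n; rewrite xSS // S_INR; unfold a, b; ring.
Qed.

Lemma W2_rec N : W2 (S j) (S N) =
  a * W2 (S j) N + (a * (2 * W1 (S j) N + W0 (S j) N) +
                    b * (W2 j N + 2 * W1 j N + W0 j N)).
Proof.
unfold W0, W1, W2; rewrite sum_shift x0S Rmult_0_r Rplus_0_l.
rewrite (sum_ext (g := fun n => a * ((INR n + 1) ^ 2 * x n (S j)) +
   (2 * a * ((INR n + 1) * x n (S j)) + a * x n (S j) +
   (b * ((INR n + 1) ^ 2 * x n j) + 2 * b * ((INR n + 1) * x n j) + b * x n j)))).
- rewrite !sum_plus !sum_scal; ring.
- intro n; rewrite xSS // S_INR; unfold a, b; ring.
Qed.
End Step.

Lemma gr_W0 j : Un_growing (W0 j).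
Proof. apply gr_sum; auto. Qed.
Lemma gr_W1 j : Un_growing (W1 j).
Proof.
apply gr_sum; intro n; apply Rmult_le_pos; auto.
pose proof (pos_INR n); lra.
Qed.
Lemma gr_W2 j : Un_growing (W2 j).
Proof.
apply gr_sum; intro n; apply Rmult_le_pos; auto.
apply pow_le; pose proof (pos_INR n); lra.
Qed.

Lemma ana_main j : (j < w)%coq_nat ->
  Un_cv (W0 j) (INR w / (INR w - INR j)) /\
  Un_cv (W1 j) (INR w / (INR w - INR j) * E1 w j) /\
  Un_cv (W2 j) (INR w / (INR w - INR j) * E2 w j).
Proof.
assert (Hw0 : forall j, (j < w)%coq_nat -> 0 < INR w - INR j).
{ intros k Hk; apply lt_INR in Hk; lra. }
induction j as [|j IH]; intros Hj.
- assert (Hw : INR w <> 0) by (specialize (Hw0 0%nat Hj); simpl in Hw0; lra).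
  unfold E2, E1; simpl; rewrite Rminus_0_r.
  repeat split; apply cv_const; intro N; destruct (W_base N) as [H0 [H1 H2]];
    [rewrite H0 | rewrite H1 | rewrite H2]; field; auto.
- assert (Hj' : (j < w)%coq_nat) by lia.
  destruct (IH Hj') as [C0 [C1 C2]].
  pose proof (Hw0 _ Hj) as P1. pose proof (Hw0 _ Hj') as P2.
  assert (Hw : 0 < INR w) by (pose proof (pos_INR (S j)); lra).
  rewrite S_INR in P1.
  set (a := INR (S j) / INR w).
  set (b := (INR w - INR j) / INR w).
  assert (Ha : 0 <= a < 1).
  { unfold a; rewrite S_INR; split.
    - apply Rmult_le_pos; [pose proof (pos_INR j); lra | left; apply Rinv_0_lt_compat; auto].
    - apply (Rmult_lt_reg_r (INR w)); auto. unfold Rdiv; rewrite Rmult_assoc Rinv_l; lra. }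
  assert (Hb : 0 <= b).
  { unfold b; apply Rmult_le_pos; [lra | left; apply Rinv_0_lt_compat; auto]. }
  assert (D0 : Un_cv (W0 (S j)) (INR w / (INR w - INR (S j)))).
  { eapply cv_eq; [| apply (key (r := fun N => b * W0 j N) (lr := b * (INR w / (INR w - INR j))) Ha)].
    - unfold a, b; rewrite S_INR; field; lra.
    - apply gr_W0.
    - apply gr_scal; auto; apply gr_W0.
    - apply cv_scal; eauto.
    - intro N; apply W0_rec; auto. }
  assert (D1 : Un_cv (W1 (S j)) (INR w / (INR w - INR (S j)) * E1 w (S j))).
  { eapply cv_eq; [| apply (key (r := fun N => a * W0 (S j) N + b * (W1 j N + W0 j N)) (lr := a * (INR w / (INR w - INR (S j))) + b * (INR w / (INR w - INR j) * E1 w j + INR w / (INR w - INR j))) Ha)].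
    - unfold a, b; rewrite E1_S S_INR; field; lra.
    - apply gr_W1.
    - apply gr_plus; [apply gr_scal; [apply Ha | apply gr_W0] | apply gr_scal; [auto | apply gr_plus; [apply gr_W1 | apply gr_W0]]].
    - apply CV_plus; apply cv_scal; eauto; apply CV_plus; eauto.
    - intro N; apply W1_rec; auto. }
  assert (D2 : Un_cv (W2 (S j)) (INR w / (INR w - INR (S j)) * E2 w (S j))).
  { eapply cv_eq; [| apply (key (r := fun N => a * (2 * W1 (S j) N + W0 (S j) N) +
                    b * (W2 j N + 2 * W1 j N + W0 j N))
       (lr := a * (2 * (INR w / (INR w - INR (S j)) * E1 w (S j)) + INR w / (INR w - INR (S j))) +
              b * (INR w / (INR w - INR j) * E2 w j + 2 * (INR w / (INR w - INR j) * E1 w j) + INR w / (INR w - INR j))) Ha)].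
    - unfold a, b; rewrite E2_S E1_S S_INR; field; lra.
    - apply gr_W2.
    - apply gr_plus; apply gr_scal.
      + apply Ha.
      + apply gr_plus; [apply gr_scal; [lra|apply gr_W1] | apply gr_W0].
      + auto.
      + apply gr_plus; [apply gr_plus; [apply gr_W2 | apply gr_scal; [lra|apply gr_W1]] | apply gr_W0].
    - apply CV_plus; apply cv_scal.
      + apply CV_plus; [apply cv_scal|]; eauto.
      + apply CV_plus; [apply CV_plus; [|apply cv_scal]|]; eauto.
    - intro N; apply W2_rec; auto. }
  auto.
Qed.

End Ana.

Section RealTools2.
Local Open Scope R_scope.

Lemma isum_cv s l : infinite_sum s l <-> Un_cv (sum_f_R0 s) l. Proof. split; auto. Qed.

Lemma cv_unshift (U : nat -> R) l : Un_cv (fun n => U (S n)) l -> Un_cv U l.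
Proof.
intros H eps Heps; destruct (H eps Heps) as [N HN]; exists (S N); intros n Hn.
destruct n as [|n]; [unfold ge in Hn; lia|]. apply HN; unfold ge in *; lia.
Qed.

Lemma cv_from_shift (f : nat -> R) l :
  Un_cv (sum_f_R0 (fun n => f (S n))) l -> Un_cv (sum_f_R0 f) (f 0%nat + l).
Proof.
intros H; apply cv_unshift.
apply (cv_ext (U := fun N => f 0%nat + sum_f_R0 (fun n => f (S n)) N)).
- intro N; rewrite sum_shift; auto.
- apply CV_plus; auto; apply cv_const; auto.
Qed.

Lemma sum_ext_le (f g : nat -> R) N :
  (forall n, (n <= N)%coq_nat -> f n = g n) -> sum_f_R0 f N = sum_f_R0 g N.
Proof.
intros H; induction N as [|N IH]; simpl.
- apply H; lia.
- rewrite IH; [rewrite H; auto; lia | intros; apply H; lia].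
Qed.

Lemma fin_sum_cv K (F : nat -> nat -> R) (L : nat -> R) :
  (forall j, (j <= K)%coq_nat -> Un_cv (sum_f_R0 (F j)) (L j)) ->
  Un_cv (sum_f_R0 (fun n => sum_f_R0 (fun j => F j n) K)) (sum_f_R0 L K).
Proof.
induction K as [|K IH]; intros H.
- simpl; apply H; lia.
- apply (cv_ext (U := fun N => sum_f_R0 (fun n => sum_f_R0 (fun j => F j n) K) N +
                              sum_f_R0 (F (S K)) N)).
  + intro N; rewrite -sum_plus; apply sum_ext; intro n; reflexivity.
  + simpl; apply CV_plus; [apply IH; intros; apply H; lia | apply H; lia].
Qed.

Lemma tele (q : nat -> R) K : sum_f_R0 (fun j => q (S j) - q j) K = q (S K) - q 0%nat.
Proof. induction K as [|K IH]; simpl; [ring | rewrite IH; ring]. Qed.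

Lemma abel (q D : nat -> R) K :
  sum_f_R0 (fun j => (q (S j) - q j) * sum_f_R0 D j) K =
  sum_f_R0 (fun k => (q (S K) - q k) * D k) K.
Proof.
induction K as [|K IH].
- simpl; ring.
- rewrite [sum_f_R0 (fun j => _) (S K)]/= IH.
  rewrite [sum_f_R0 (fun k => _) (S K)]/=.
  rewrite (sum_ext (f := fun k => (q (S (S K)) - q k) * D k) (g := fun k => (q (S K) - q k) * D k + (q (S (S K)) - q (S K)) * D k)).
  + rewrite sum_plus sum_scal /=; ring.
  + intro n; ring.
Qed.

Lemma harmS m : harm (S m) = harm m + / INR (S m).
Proof. reflexivity. Qed.

Lemma E1_harm w k : (k < w)%coq_nat -> E1 w k = INR w * (harm w - harm (w - S k)%N).
Proof.
induction k as [|k IH]; intros Hk.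
- destruct w as [|m]; [lia|].
  change (E1 (S m) 0) with (INR (S m) / (INR (S m) - INR 0)).
  have -> : (S m - 1 = m)%N by lia.
  rewrite harmS; change (INR 0) with 0.
  assert (0 < INR (S m)) by (apply lt_0_INR; lia).
  field; lra.
- rewrite E1_S IH; [|lia].
  assert (E : (w - S k = S (w - S (S k)))%N) by lia.
  rewrite E harmS -E minus_INR; [|lia].
  assert (INR (S k) < INR w) by (apply lt_INR; lia).
  field; lra.
Qed.

Lemma stuff_eq w k : (k < w)%coq_nat ->
  2 * INR w / (INR w - INR k) * E1 w k - INR w / (INR w - INR k) =
  INR w * (INR w + INR k) / (INR w - INR k) ^ 2
  + 2 * INR w ^ 2 / (INR w - INR k) * (harm w - harm (w - k)%N).
Proof.
intros Hk; rewrite E1_harm //.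
assert (E : (w - k = S (w - S k))%N) by lia.
rewrite E harmS -E minus_INR; [|lia].
assert (INR k < INR w) by (apply lt_INR; lia).
field; lra.
Qed.

End RealTools2.

Section Assembly.
Variable W : finType.
Variable Gs : seq {set W}.
Hypothesis hw : (0 < #|W|)%N.
Local Open Scope R_scope.
Notation w := #|W|.
Notation tr := (Defs.transversal Gs).

Lemma INR_muln (a b : nat) : INR (a * b)%N = INR a * INR b.
Proof. exact: mult_INR. Qed.
Lemma INR_addn (a b : nat) : INR (a + b)%N = INR a + INR b.
Proof. exact: plus_INR. Qed.
Lemma INR_expn (a n : nat) : INR (a ^ n)%N = INR a ^ n.
Proof.
elim: n => [|n IH]; first by rewrite expn0.
by rewrite expnS INR_muln IH /=.
Qed.

Lemma card_set_sum (T : finType) (P : pred T) : #|[set f | P f]| = \sum_(f : T) (P f : nat).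
Proof.
rewrite -sum1_card big_mkcond /=; apply: eq_bigr => f _; rewrite inE; by case: (P f).
Qed.

Lemma INR_big m (F : nat -> nat) : (0 < m)%N ->
  INR (\sum_(k < m) F k) = sum_f_R0 (fun k => INR (F k)) (m - 1).
Proof.
case: m => // m _; rewrite subn1 /=.
elim: m => [|m IH]; first by rewrite big_ord_recr big_ord0 /= add0n.
by rewrite big_ord_recr /= INR_addn IH.
Qed.

Lemma Rw_pos : 0 < INR w.
Proof. apply: lt_0_INR; exact/ltP. Qed.

Lemma INR_ltn (a b : nat) : (a < b)%N -> INR a < INR b.
Proof. move=> H; apply: lt_INR; exact/ltP. Qed.

Lemma s_S n j : s n.+1 j = (j * (s n j + s n j.-1))%N.
Proof. by []. Qed.

Definition piw (n j : nat) : R := INR ('C(w, j) * s n j)%N / INR w ^ n.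

Lemma piw_ge0 n j : 0 <= piw n j.
Proof.
rewrite /piw /Rdiv; apply: Rmult_le_pos; first exact: pos_INR.
left; apply: Rinv_0_lt_compat; apply: pow_lt; exact: Rw_pos.
Qed.

Lemma piw00 : piw 0 0 = 1.
Proof. rewrite /piw bin0 mul1n /=. lra. Qed.

Lemma piw0S j : piw 0 (S j) = 0.
Proof. rewrite /piw /= muln0 /=; lra. Qed.

Lemma piwS0 n : piw (S n) 0 = 0.
Proof. rewrite /piw /= mul0n muln0 /=; lra. Qed.

Lemma piwSS n j : (S j < w)%coq_nat ->
  piw (S n) (S j) = INR (S j) / INR w * piw n (S j) + (INR w - INR j) / INR w * piw n j.
Proof.
move=> /ltP Hj.
have HB := mul_bin_left w j.
have HBR : INR ('C(w, j.+1)) = (INR w - INR j) * INR ('C(w, j)) / INR j.+1.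
  have := f_equal INR HB; rewrite !INR_muln minus_INR; last by apply/leP; apply: ltnW; apply: ltnW.
  move=> E; rewrite -E; have : 0 < INR j.+1 by apply: lt_0_INR; lia.
  move=> H; field; lra.
rewrite /piw s_S [j.+1.-1]/= [INR w ^ n.+1]/= !INR_muln INR_addn HBR S_INR.
have : 0 < INR w := Rw_pos.
have : 0 < INR w ^ n by apply: pow_lt; exact: Rw_pos.
have : 0 < INR j.+1 by apply: lt_0_INR; lia.
move=> H1 H2 H3; rewrite S_INR in H1; set p := INR w ^ n in H2 *; clearbody p; move: (INR w) (INR j) (INR (s n j.+1)) (INR (s n j)) (INR (binomial w j)) p H1 H2 H3 => a b c d e f Ha Hf Hb. field; lra.
Qed.

Lemma ana : forall j, (j < w)%coq_nat ->
  Un_cv (W0 piw j) (INR w / (INR w - INR j)) /\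
  Un_cv (W1 piw j) (INR w / (INR w - INR j) * E1 w j) /\
  Un_cv (W2 piw j) (INR w / (INR w - INR j) * E2 w j).
Proof.
apply: ana_main; [exact: piw_ge0 | exact: piw00 | exact: piw0S | exact: piwS0 | exact: piwSS].
Qed.

Definition cc j := qk Gs j.+1 - qk Gs j.
Definition dd j := (INR w - INR j) / INR w.

Lemma Mq j : (j < w)%N -> cc j * INR 'C(w, j) * (INR w - INR j) = INR (M Gs j).
Proof.
move=> Hj.
have HM := f_equal INR (M_tau Gs j).
rewrite INR_addn !INR_muln minus_INR in HM; last by apply/leP; apply: ltnW.
have HB := f_equal INR (mul_bin_left w j).
rewrite !INR_muln minus_INR in HB; last by apply/leP; apply: ltnW.
have C0 : 0 < INR 'C(w, j) by apply: lt_0_INR; apply/ltP; rewrite bin_gt0 ltnW.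
have C1 : 0 < INR 'C(w, j.+1) by apply: lt_0_INR; apply/ltP; rewrite bin_gt0.
have Hjw : INR j < INR w by apply: INR_ltn.
have HS : 0 < INR j.+1 by apply: lt_0_INR; lia.
have -> : INR (M Gs j) = INR j.+1 * INR (tau Gs j.+1) - (INR w - INR j) * INR (tau Gs j) by lra.
have HC1 : INR 'C(w, j.+1) = (INR w - INR j) * INR 'C(w, j) / INR j.+1.
  rewrite -HB; field; lra.
rewrite /cc /qk HC1; field; lra.
Qed.

Lemma probTD0 k : (0 < k)%N -> probTD Gs k 0 = 0.
Proof.
move=> Hk; rewrite /probTD card_set_sum big1 /=; first lra.
move=> f _; rewrite /Dk_is drawn0 cards0.
by case: k Hk => // k' _; rewrite ltn0 andbF.
Qed.

Lemma probTD_S n j : (j < w)%N -> probTD Gs j.+1 n.+1 = cc j * dd j * piw n j.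
Proof.
move=> Hj; rewrite /probTD card_set_sum /= cntTD INR_muln INR_expn -Mq //.
rewrite /dd /piw INR_muln [INR w ^ n.+1]/=.
have H1 : 0 < INR w := Rw_pos.
have H2 : 0 < INR w ^ n by apply: pow_lt; exact: Rw_pos.
set p := INR w ^ n in H2 *; clearbody p.
move: (INR w) (INR j) (INR (s n j)) (INR (binomial w j)) (cc j) H1 H2 => a b c d e Ha Hp.
field; lra.
Qed.

Lemma probT_S n : probT Gs n.+1 = sum_f_R0 (fun j => cc j * dd j * piw n j) (w - 1).
Proof.
rewrite /probT card_set_sum cntT.
rewrite (INR_big (fun k => \sum_(f : {ffun 'I_n.+1 -> W}) (T_is Gs f && Dk_is k.+1 f)) hw).
rewrite /Rdiv Rmult_comm -sum_scal.
apply: sum_ext_le => j Hj.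
rewrite -probTD_S; last by lia.
by rewrite /probTD card_set_sum /Rdiv Rmult_comm.
Qed.

Lemma T_is0 (f : {ffun 'I_0 -> W}) : T_is Gs f = tr set0.
Proof.
rewrite /T_is drawn0; case: (tr set0) => //=; apply/forallP => -[m Hm].
by exfalso; move: Hm; rewrite ltn0.
Qed.

Lemma probT0 : probT Gs 0 = qk Gs 0.
Proof.
rewrite /probT /qk bin0 expn0 card_set_sum tau_sum.
under eq_bigr do rewrite T_is0.
rewrite sum_nat_const card_ffun card_ord expn0 mul1n.
rewrite (bigD1 set0) //= cards0 eqxx big1 ?addn0 // => X nX.
by rewrite cards_eq0 (negbTE nX).
Qed.

Lemma tr_setT : (forall G, G \in Gs -> G != set0) -> tr setT.
Proof. by move=> hG; apply/allP => G HG; rewrite setTI hG. Qed.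

Lemma qkw : (forall G, G \in Gs -> G != set0) -> qk Gs w = 1.
Proof.
move=> hG; rewrite /qk binn tau_sum.
rewrite (bigD1 setT) //= cardsT eqxx tr_setT // big1 ?addn0 /=; first lra.
move=> X nX; have -> : (#|X| == w) = false.
  apply/negbTE; apply: contra nX => /eqP E.
  by rewrite eqEcard subsetT cardsT E leqnn.
by [].
Qed.


Lemma ser_j (c : R) j : (j < w)%N ->
  Un_cv (sum_f_R0 (fun n => c * dd j * piw n j)) c /\
  Un_cv (sum_f_R0 (fun n => c * dd j * ((INR n + 1) * piw n j))) (c * E1 w j) /\
  Un_cv (sum_f_R0 (fun n => c * dd j * ((INR n + 1) ^ 2 * piw n j))) (c * E2 w j).
Proof.
move=> Hj; have Hj' : (j < w)%coq_nat by apply/ltP.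
have [C0 [C1 C2]] := ana Hj'.
have Hw := Rw_pos.
have Hwj : INR j < INR w by apply: INR_ltn.
have Ed : c * dd j * (INR w / (INR w - INR j)) = c.
  rewrite /dd; move: (INR w) (INR j) Hw Hwj => a b Ha Hb; field; lra.
split; [|split].
- apply: (cv_ext (U := fun N => c * dd j * W0 piw j N)); first by move=> N; rewrite /W0 sum_scal.
  exact: (cv_eq Ed (cv_scal (c * dd j) C0)).
- apply: (cv_ext (U := fun N => c * dd j * W1 piw j N)); first by move=> N; rewrite /W1 sum_scal.
  apply: (cv_eq _ (cv_scal (c * dd j) C1)); by rewrite -Rmult_assoc Ed.
- apply: (cv_ext (U := fun N => c * dd j * W2 piw j N)); first by move=> N; rewrite /W2 sum_scal.
  apply: (cv_eq _ (cv_scal (c * dd j) C2)); by rewrite -Rmult_assoc Ed.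
Qed.

Lemma serT0 : Un_cv (sum_f_R0 (fun n => probT Gs n.+1)) (sum_f_R0 cc (w - 1)).
Proof.
apply: (cv_ext (U := sum_f_R0 (fun n => sum_f_R0 (fun j => cc j * dd j * piw n j) (w - 1)))).
  by move=> N; apply: sum_ext => n; rewrite probT_S.
apply: (fin_sum_cv (F := fun j n => cc j * dd j * piw n j)) => j Hj.
have Hj' : (j < w)%N by lia.
by case: (ser_j (cc j) Hj').
Qed.

Lemma serT1 : Un_cv (sum_f_R0 (fun n => INR n.+1 * probT Gs n.+1))
                    (sum_f_R0 (fun j => cc j * E1 w j) (w - 1)).
Proof.
apply: (cv_ext (U := sum_f_R0 (fun n => sum_f_R0 (fun j => cc j * dd j * ((INR n + 1) * piw n j)) (w - 1)))).
  move=> N; apply: sum_ext => n; rewrite probT_S S_INR -sum_scal.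
  by apply: sum_ext => j; ring.
apply: (fin_sum_cv (F := fun j n => cc j * dd j * ((INR n + 1) * piw n j))) => j Hj.
have Hj' : (j < w)%N by lia.
by case: (ser_j (cc j) Hj') => _ [].
Qed.

Lemma serT2 : Un_cv (sum_f_R0 (fun n => INR n.+1 ^ 2 * probT Gs n.+1))
                    (sum_f_R0 (fun j => cc j * E2 w j) (w - 1)).
Proof.
apply: (cv_ext (U := sum_f_R0 (fun n => sum_f_R0 (fun j => cc j * dd j * ((INR n + 1) ^ 2 * piw n j)) (w - 1)))).
  move=> N; apply: sum_ext => n; rewrite probT_S S_INR -sum_scal.
  by apply: sum_ext => j; ring.
apply: (fin_sum_cv (F := fun j n => cc j * dd j * ((INR n + 1) ^ 2 * piw n j))) => j Hj.
have Hj' : (j < w)%N by lia.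
by case: (ser_j (cc j) Hj') => _ [].
Qed.

End Assembly.

Local Open Scope R_scope.

Theorem mainTheorem3 (W : finType) (Gs : seq {set W})
    (hw : (0 < #|W|)%N) (hG : forall G, G \in Gs -> G != set0) :
  (forall k : nat, (1 <= k <= #|W|)%N ->
     infinite_sum (fun n => probTD Gs k n) (qk Gs k - qk Gs (k - 1)))
  /\
  exists ET V : R,
    infinite_sum (fun n => INR n * probT Gs n) ET /\
    infinite_sum (fun n => (INR n - ET) ^ 2 * probT Gs n) V /\
    V = (sum_f_R0 (fun k =>
           (1 - qk Gs k) *
           ((INR #|W|) * ((INR #|W|) + INR k) / ((INR #|W|) - INR k) ^ 2
            + 2 * (INR #|W|) ^ 2 / ((INR #|W|) - INR k)
                * (harm #|W| - harm (#|W| - k)%N)))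
         (#|W| - 1)%N
         - ET ^ 2).
Proof.
split.
- move=> k /andP [k1 kw]; case: k k1 kw => // j _ kw.
  rewrite subn1 /=.
  apply/isum_cv.
  have -> : qk Gs j.+1 - qk Gs j = probTD Gs j.+1 0 + cc Gs j.
    by rewrite probTD0 // /cc; ring.
  apply: cv_from_shift.
  apply: (cv_ext (U := sum_f_R0 (fun n => cc Gs j * dd W j * piw W n j))).
    by move=> N; apply: sum_ext => n; rewrite probTD_S.
  by case: (ser_j hw (cc Gs j) kw).
- set ET := sum_f_R0 (fun j => cc Gs j * E1 #|W| j) (#|W| - 1).
  set E2T := sum_f_R0 (fun j => cc Gs j * E2 #|W| j) (#|W| - 1).
  have HB : Un_cv (sum_f_R0 (fun n => INR n * probT Gs n)) ET.
    apply: (cv_eq _ (cv_from_shift (f := fun n => INR n * probT Gs n) (serT1 Gs hw))).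
    rewrite /ET /=; ring.
  have HA : Un_cv (sum_f_R0 (fun n => INR n ^ 2 * probT Gs n)) E2T.
    apply: (cv_eq _ (cv_from_shift (f := fun n => INR n ^ 2 * probT Gs n) (serT2 Gs hw))).
    rewrite /E2T /=; ring.
  have HC : Un_cv (sum_f_R0 (fun n => probT Gs n)) 1.
    apply: (cv_eq _ (cv_from_shift (f := fun n => probT Gs n) (serT0 Gs hw))).
    rewrite probT0 /cc (tele (qk Gs)) subn1 prednK // qkw //; ring.
  clearbody ET.
  exists ET, (E2T - ET ^ 2); split; [|split].
  + exact/isum_cv.
  + apply/isum_cv.
    apply: (cv_ext (U := fun N => sum_f_R0 (fun n => INR n ^ 2 * probT Gs n) N +
                                 (-2 * ET) * sum_f_R0 (fun n => INR n * probT Gs n) N +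
                                 ET ^ 2 * sum_f_R0 (fun n => probT Gs n) N)).
      move=> N; rewrite -!sum_scal -!sum_plus; apply: sum_ext => n; ring.
    apply: (cv_eq _ (CV_plus _ _ _ _ (CV_plus _ _ _ _ HA (cv_scal (-2 * ET) HB)) (cv_scal (ET ^ 2) HC))).
    ring.
  + congr (_ - _).
    rewrite /E2T /cc.
    have -> : sum_f_R0 (fun j => (qk Gs j.+1 - qk Gs j) * E2 #|W| j) (#|W| - 1) =
              sum_f_R0 (fun j => (qk Gs j.+1 - qk Gs j) *
                 sum_f_R0 (fun i => 2 * INR #|W| / (INR #|W| - INR i) * E1 #|W| i
                                    - INR #|W| / (INR #|W| - INR i)) j) (#|W| - 1) by [].
    rewrite abel subn1 prednK // qkw //.
    apply: sum_ext_le => k Hk.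
    rewrite stuff_eq //; lia.
Qed.
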